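(* $\displaystyle\min_{\underline y\in\mathcal F}\sum_{j\in\tilde R}c_jy_j\le\min_{\underline x\in\mathcal F_0}\sum_{j\in\tilde R}c_jx_j$.
   Context: Let $G=(V,E)$ be a finite undirected graph with $V=Q\cup R\cup B$ (pairwise disjoint), where $Q$ is the set of sources, $R$ the set of potential relay locations and $B$ the set of potential sink locations; let $h_{\max}$ be a positive integer and $c_s,c_r\ge0$. Form the augmented graph $\tilde G=(\tilde V,\tilde E)$ with $\tilde V=V\cup\{0\}$, where $0$ is a new vertex (virtual sink), and $\tilde E=E\cup\{\{0,b\}:b\in B\}$. Let $\tilde R=R\cup B$ with node costs $c_j=c_r$ for $j\in R$ and $c_j=c_s$ for $j\in B$. For a source $k\in Q$, a node cut for $k$ is a set $\gamma\subseteq\tilde V\setminus\{k,0\}$ whose deletion disconnects $k$ from $0$ in $\tilde G$; it is minimal if no proper subset is a node cut; $\Gamma^k$ denotes the set of minimal node cuts for $k$. A vector $\underline y=((y_{j,k})_{k\in Q,\,j\in\tilde V\setminus\{k,0\}},(y_j)_{j\in\tilde R})$ belongs to $\mathcal F$ iff: (i) $\sum_{j\in\gamma}y_{j,k}\ge1$ for all $\gamma\in\Gamma^k$, $k\in Q$; (ii) $y_j\ge y_{j,k}$ for all $j\in\tilde R$, $k\in Q$; (iii) $\sum_{j\in\tilde V\setminus\{k,0\}}y_{j,k}\le h_{\max}$ for all $k\in Q$; (iv) all $y_{j,k},y_j\in\{0,1\}$. For $k\in Q$ let $\mathcal P'_k$ be the set of paths in $\tilde G$ from $k$ to $0$ with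 at most $h_{\max}+1$ edges, and let $\mathcal U_0$ be the set of tuples $\underline g=(p_k)_{k\in Q}$ with $p_k\in\mathcal P'_k$. For $\underline g\in\mathcal U_0$ define $\underline x(\underline g)$ by $x_{j,k}=1$ if $j$ is a vertex of $p_k$ and $0$ otherwise ($k\in Q$, $j\in\tilde V\setminus\{k,0\}$), and $x_j=1$ if $x_{j,k}=1$ for some $k\in Q$ and $0$ otherwise ($j\in\tilde R$). Let $\mathcal F_0=\{\underline x(\underline g):\underline g\in\mathcal U_0\}$. A minimum over an empty set is taken to be $+\infty$. (The right-hand side is the optimum cost of the multi-sink relay placement problem with hop bound $h_{\max}$; the left-hand side is the optimum of the node-cut ILP.) *)

(* Defs.v *)
From mathcomp Require Import all_boot all_order all_algebra.
From mathcomp Require Import boolp constructive_ereal.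
Set Implicit Arguments. Unset Strict Implicit. Unset Printing Implicit Defensive.
Import Order.TTheory GRing.Theory Num.Theory.

(* Vertices of the augmented graph are [option T]:
   [Some v] is the original vertex v, [None] is the virtual sink 0. *)

Definition aug_edge (T : finType) (e : rel T) (B : {set T}) : rel (option T) :=
  fun u v =>
    match u, v with
    | Some a, Some b => e a b
    | Some a, None => a \in B
    | None, Some b => b \in B
    | None, None => false
    end.

Definition Rtilde (T : finType) (R B : {set T}) : {set option T} :=
  [set j | if j is Some v then (v \in R) || (v \in B) else false].

Definition cost_node (T : finType) (Rt : realDomainType) (R : {set T})
  (cs cr : Rt) (j : option T) : Rt :=
  if j is Some v then (if v \in R then cr else cs) else 0.

Definition is_node_cut (T : finType) (e : rel T) (B : {set T}) (k : T)
  (gamma : {set option T}) : bool :=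
  (gamma \subset ~: [set Some k; None]) &&
  ~~ connect [rel u v | aug_edge e B u v && (u \notin gamma) && (v \notin gamma)]
       (Some k) None.

Definition is_min_node_cut (T : finType) (e : rel T) (B : {set T}) (k : T)
  (gamma : {set option T}) : bool :=
  is_node_cut e B k gamma &&
  [forall g' : {set option T}, (g' \proper gamma) ==> ~~ is_node_cut e B k g'].

(* The first component, indexed by pairs (k, j),
   stores y_{j,k}; the second stores y_j.  Coordinates outside the index set
   of the paper (k ∉ Q, j ∈ {k,0}; resp. j ∉ ~R) are required to be 0, so
   that vectors correspond bijectively to the paper's vectors. *)
Definition vec (T : finType) : finType :=
  ({ffun T * option T -> bool} * {ffun option T -> bool})%type.

Definition yk (T : finType) (y : vec T) (j : option T) (k : T) : bool := y.1 (k, j).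
Definition yr (T : finType) (y : vec T) (j : option T) : bool := y.2 j.

Definition idx (T : finType) (k : T) : {set option T} := ~: [set Some k; None].

Definition well_indexed (T : finType) (Q R B : {set T}) (y : vec T) : bool :=
  [forall k : T, forall j : option T,
     ((k \notin Q) || (j \notin idx k)) ==> ~~ yk y j k] &&
  [forall j : option T, (j \notin Rtilde R B) ==> ~~ yr y j].

(* the feasible set F of the node-cut ILP; (iv) is built into the type *)
Definition in_F (T : finType) (e : rel T) (Q R B : {set T}) (hmax : nat)
  (y : vec T) : bool :=
  well_indexed Q R B y &&
  [forall k in Q, forall gamma : {set option T},
     is_min_node_cut e B k gamma ==> (1 <= \sum_(j in gamma) yk y j k)%N] &&
  [forall j in Rtilde R B, forall k in Q, yk y j k ==> yr y j] &&
  [forall k in Q, (\sum_(j in idx k) yk y j k <= hmax)%N].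

Definition is_path_k (T : finType) (e : rel T) (B : {set T}) (hmax : nat)
  (k : T) (p : seq (option T)) : Prop :=
  path (aug_edge e B) (Some k) p /\ last (Some k) p = None /\
  uniq (Some k :: p) /\ (size p <= hmax.+1)%N.

Definition in_U0 (T : finType) (e : rel T) (Q B : {set T}) (hmax : nat)
  (g : T -> seq (option T)) : Prop :=
  forall k, k \in Q -> is_path_k e B hmax k (g k).

Definition x_of (T : finType) (Q R B : {set T}) (g : T -> seq (option T)) : vec T :=
  ([ffun kj : T * option T =>
      [&& kj.1 \in Q, kj.2 \in idx kj.1 & kj.2 \in (Some kj.1 :: g kj.1)]],
   [ffun j : option T =>
      (j \in Rtilde R B) && [exists k in Q, (j \in idx k) && (j \in Some k :: g k)]]).

Definition in_F0 (T : finType) (e : rel T) (Q R B : {set T}) (hmax : nat)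
  (x : vec T) : Prop :=
  exists g, in_U0 e Q B hmax g /\ x = x_of Q R B g.

Definition objective (T : finType) (Rt : realDomainType) (R B : {set T})
  (cs cr : Rt) (y : vec T) : Rt :=
  \sum_(j in Rtilde R B) (if yr y j then cost_node R cs cr j else 0).

Definition min_over (T : finType) (Rt : realDomainType) (P : pred (vec T))
  (f : vec T -> Rt) : \bar Rt :=
  \big[mine/+oo%E]_(y | P y) (f y)%:E.

(* Main.v *)
Require Import Defs.
From mathcomp Require Import all_boot all_order all_algebra.
From mathcomp Require Import boolp constructive_ereal.
Import Order.TTheory.

Lemma min_over_mono (T : finType) (Rt : realDomainType) (P P0 : pred (vec T))
  (f : vec T -> Rt) : (forall y, P0 y -> P y) ->
  (min_over P f <= min_over P0 f)%E.
Proof.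
move=> sub; rewrite /min_over.
have H : forall y, P0 y -> (\big[mine/+oo%E]_(y | P y) (f y)%:E <= (f y)%:E)%E.
  move=> y Py; rewrite (bigD1 y) ?sub //=.
  by rewrite ge_min lexx.
set L := \big[mine/+oo%E]_(y | P y) (f y)%:E in H *.
apply: (big_rec (fun a => (L <= a)%E)) => [|y a Py Ha]; first exact: leey.
by rewrite le_min Ha H.
Qed.

Lemma path_avoid (T : finType) (e : rel T) (B : {set T}) (gamma : {set option T})
  x p : path (aug_edge e B) x p -> x \notin gamma ->
  all (fun v => v \notin gamma) p ->
  path [rel u v | aug_edge e B u v && (u \notin gamma) && (v \notin gamma)] x p.
Proof.
elim: p x => [//|y p IH] x /= /andP[exy pp] xg /andP[yg ap].
by rewrite /= exy xg yg /= IH.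
Qed.

Lemma F0_sub_F (T : finType) (e : rel T) (Q R B : {set T}) (hmax : nat) x :
  in_F0 e Q R B hmax x -> in_F e Q R B hmax x.
Proof.
move=> [g [Ug ->]].
have ykE : forall j k, yk (x_of Q R B g) j k =
   [&& k \in Q, j \in idx k & j \in Some k :: g k].
  by move=> j k; rewrite /yk /x_of /= ffunE.
have yrE : forall j, yr (x_of Q R B g) j =
   (j \in Rtilde R B) && [exists k in Q, (j \in idx k) && (j \in Some k :: g k)].
  by move=> j; rewrite /yr /x_of /= ffunE.
apply/andP; split; [apply/andP; split; [apply/andP; split|]|].
- apply/andP; split.
    apply/forallP => k; apply/forallP => j; apply/implyP => /orP[kQ|ji];
      rewrite ykE; apply/negP => /and3P[a b c].
      by rewrite a in kQ.
    by rewrite b in ji.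
  apply/forallP => j; apply/implyP => jR; rewrite yrE.
  by rewrite (negbTE jR).
- apply/forallP => k; apply/implyP => kQ; apply/forallP => gamma.
  apply/implyP => /andP[/andP[gsub ncut] _].
  have [pp [pl [pu ps]]] := Ug k kQ.
  have : has (fun v => v \in gamma) (Some k :: g k).
    apply/negPn/negP => /hasPn hn.
    move/negP: ncut; apply; apply/connectP.
    exists (g k); last by rewrite pl.
    apply: path_avoid => //.
      by apply: hn; rewrite mem_head.
    by apply/allP => v vin; apply: hn; rewrite inE vin orbT.
  move=> /hasP[j jin jg].
  rewrite (bigD1 j) //= ykE kQ jin.
  by rewrite (subsetP gsub j jg).
- apply/forallP => j; apply/implyP => jR; apply/forallP => k; apply/implyP => kQ.
  rewrite ykE yrE jR kQ /=; apply/implyP => /andP[ji js].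
  by apply/existsP; exists k; rewrite kQ ji js.
- apply/forallP => k; apply/implyP => kQ.
  have [pp [pl [pu ps]]] := Ug k kQ.
  have -> : \sum_(j in idx k) yk (x_of Q R B g) j k =
            \sum_(j in idx k | j \in Some k :: g k) 1.
    rewrite big_mkcondr /=; apply: eq_bigr => j ji.
    by rewrite ykE kQ ji /=; case: (_ \in _).
  rewrite sum1_card.
  set s := filter (predC1 None) (g k).
  have le1 : #|[pred j in idx k | j \in Some k :: g k]| <= size s.
    apply: leq_trans (card_size s).
    apply: subset_leq_card; apply/subsetP => j /=.
    rewrite unfold_in /= /idx !inE negb_or => /andP[/andP[n1 n2]].
    rewrite (negbTE n1) /= => jin.
    by rewrite /s mem_filter /= n2 jin.
  apply: leq_trans le1 _.
  have Nin : None \in g k.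
    case: (g k) pl pp => [//|a q] /= <- _; exact: mem_last.
  have : size s < size (g k).
    rewrite /s size_filter -(count_predC (predC1 None)).
    rewrite -addn1 leq_add2l.
    rewrite -has_count; apply/hasP; exists None => //.
  move=> h; have := leq_trans h ps; by rewrite ltnS.
Qed.

Theorem corollary2 (Rt : realFieldType) (T : finType) (e : rel T)
  (Q R B : {set T}) (hmax : nat) (cs cr : Rt)
  (e_sym : symmetric e)
  (QR : [disjoint Q & R]) (QB : [disjoint Q & B]) (RB : [disjoint R & B])
  (cover : Q :|: R :|: B = [set: T])
  (hpos : (0 < hmax)%N) (cs_ge0 : (0 <= cs)%R) (cr_ge0 : (0 <= cr)%R) :
  (min_over (in_F e Q R B hmax) (objective R B cs cr)
   <= min_over (fun x => `[< in_F0 e Q R B hmax x >]) (objective R B cs cr))%E.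
Proof.
apply: min_over_mono => y /asboolP; exact: F0_sub_F.
Qed.
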